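(* Let $n\ge 1$ and $k\ge 2$ be integers and let $f:\{0,1,\ldots,k-1\}^n\to\mathbb{R}$ be integer submodular, i.e. $f(\mathbf{x})+f(\mathbf{y})\ge f(\mathbf{x}\vee\mathbf{y})+f(\mathbf{x}\wedge\mathbf{y})$ for all $\mathbf{x},\mathbf{y}\in\{0,\ldots,k-1\}^n$, where $\vee,\wedge$ are the componentwise maximum and minimum. Let $F$ be the generalized multilinear extension of $f$ (defined in the context). Then: (1) If $f$ is monotone (i.e. $\mathbf{x}\le\mathbf{y}$ componentwise implies $f(\mathbf{x})\le f(\mathbf{y})$), then $\frac{\partial F}{\partial \rho_{ij}}\ge 0$ for all $i\in\{1,\ldots,n\}$ and $j\in\{1,\ldots,k-1\}$. (2) $F$ is DR-submodular, i.e. $\frac{\partial^2 F}{\partial \rho_{ij}\,\partial \rho_{i'l}}\le 0$ for all $i,i'\in\{1,\ldots,n\}$ and $j,l\in\{1,\ldots,k-1\}$ (this holds even if $f$ itself is not DR-submodular).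
   Context: For $\bm{\rho}_i=(\rho_{i1},\ldots,\rho_{i,k-1})$ define the simplex $\Delta^{k-1}=\{\bm{\rho}_i\in\mathbb{R}^{k-1}:\rho_{i1}+\cdots+\rho_{i,k-1}\le 1,\ \rho_{ij}\ge 0\}$, and let $\bm{\rho}=[\bm{\rho}_1;\ldots;\bm{\rho}_n]\in\Delta^{k-1}_n:=(\Delta^{k-1})^n$. Each $\bm{\rho}_i$ parametrizes a categorical distribution on $\{0,1,\ldots,k-1\}$ giving value $j\ge1$ probability $\rho_{ij}$ and value $0$ probability $1-\sum_{j=1}^{k-1}\rho_{ij}$. The generalized multilinear extension is $F(\bm{\rho})=\mathbb{E}[f(R(\bm{\rho}))]$, where $R(\bm{\rho})\in\{0,\ldots,k-1\}^n$ has independent coordinates, the $i$-th distributed according to $\bm{\rho}_i$. Explicitly $F(\bm{\rho})=\sum_{\mathbf{x}\in\{0,\ldots,k-1\}^n} f(\mathbf{x})\prod_{i=1}^n p_i(x_i)$ with $p_i(j)=\rho_{ij}$ for $j\ge1$ and $p_i(0)=1-\sum_{j}\rho_{ij}$; this is a polynomial in the variables $\rho_{ij}$, and its partial derivatives are those of this polynomial. *)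

(* Defs.v *)
From HB Require Import structures.
From mathcomp Require Import all_boot all_order all_algebra.
From mathcomp Require Import all_classical all_reals all_analysis.
Set Implicit Arguments. Unset Strict Implicit. Unset Printing Implicit Defensive.
Import Order.TTheory GRing.Theory Num.Theory.
Import numFieldNormedType.Exports.
Local Open Scope ring_scope.

Definition lattice_pt (n k : nat) := {ffun 'I_n -> 'I_k}.

Definition pt_join n k (x y : lattice_pt n k) : lattice_pt n k :=
  [ffun i => if (x i <= y i)%N then y i else x i].
Definition pt_meet n k (x y : lattice_pt n k) : lattice_pt n k :=
  [ffun i => if (x i <= y i)%N then x i else y i].
Definition pt_le n k (x y : lattice_pt n k) : Prop := forall i, (x i <= y i)%N.

Definition integer_submodular (R : realType) n k (f : lattice_pt n k -> R) : Prop :=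
  forall x y, f (pt_join x y) + f (pt_meet x y) <= f x + f y.

Definition monotone_fn (R : realType) n k (f : lattice_pt n k -> R) : Prop :=
  forall x y, pt_le x y -> f x <= f y.

(* rho : n x (k-1) matrix; column j (0-based) stands for rho_{i,j+1}.
   Probability that coordinate i takes value a. *)
Definition catprob (R : realType) n k (rho : 'M[R]_(n, k.-1)) (i : 'I_n) (a : 'I_k) : R :=
  if (a == 0 :> nat) then 1 - \sum_(j < k.-1) rho i j
  else \sum_(j < k.-1 | (j.+1 == a :> nat)) rho i j.

Definition in_simplex_n (R : realType) n k (rho : 'M[R]_(n, k.-1)) : Prop :=
  forall i, (forall j, 0 <= rho i j) /\ \sum_(j < k.-1) rho i j <= 1.

(* Generalized multilinear extension, as a polynomial function on all of R^{n(k-1)} *)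
Definition gme (R : realType) n k (f : lattice_pt n k -> R) (rho : 'M[R]_(n, k.-1)) : R :=
  \sum_(x : lattice_pt n k) f x * \prod_(i < n) catprob rho i (x i).

Definition edir (R : realType) n m (i : 'I_n) (j : 'I_m) : 'M[R]_(n, m) := delta_mx i j.
Arguments edir {R n m}.

(* Main.v *)
Require Import Defs.
From HB Require Import structures.
From mathcomp Require Import all_boot all_order all_algebra.
From mathcomp Require Import all_classical all_reals all_analysis.
Import Order.TTheory GRing.Theory Num.Theory.
Import numFieldNormedType.Exports.
Local Open Scope ring_scope.
From mathcomp Require Import ring lra zify.

Section S.
Variables (R : realType) (n k : nat).

Definition dd (l : 'I_k.-1) (a : 'I_k) : R := (l.+1 == a :> nat)%:R - (a == 0 :> nat)%:R.

Definition G (S : {set 'I_n}) (w : lattice_pt n k -> R) (rho : 'M[R]_(n, k.-1)) : R :=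
  \sum_(x : lattice_pt n k) w x * \prod_(t in S) catprob rho t (x t).

Lemma catprob_shift (rho : 'M[R]_(n, k.-1)) h i l t a :
  catprob (h *: edir i l + rho) t a = catprob rho t a + (if t == i then h * dd l a else 0).
Proof.
rewrite /catprob /edir /dd.
have E j : (h *: delta_mx i l + rho) t j = rho t j + (if t == i then h * (j == l)%:R else 0).
  rewrite !mxE addrC; congr (_ + _); case: (t == i) => /=; last by rewrite mulr0.
  by [].
case: ifP => a0.
  under eq_bigr do rewrite E.
  rewrite big_split /= opprD addrA; congr (_ + _).
  case: (t == i); last by rewrite big1 ?oppr0.
  rewrite -mulr_sumr (bigD1 l) //= eqxx big1 ?addr0; last by move=> j /negbTE ->.
  by rewrite (eqP a0) /= mulr1 sub0r mulrN1.
under eq_bigr do rewrite E.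
rewrite big_split /=; congr (_ + _).
case: (t == i); last by rewrite big1.
rewrite subr0 -mulr_sumr; congr (_ * _).
rewrite big_mkcond /= (bigD1 l) //= eqxx big1 ?addr0; last first.
  by move=> j /negbTE ->; case: ifP.
by case: ifP.
Qed.


Lemma G_shift_in (S : {set 'I_n}) w rho h (i : 'I_n) (l : 'I_k.-1) : i \in S ->
  G S w (h *: edir i l + rho) = G S w rho + h * G (S :\ i) (fun x => w x * dd l (x i)) rho.
Proof.
move=> iS; rewrite /G mulr_sumr -big_split; apply: eq_bigr => x _.
rewrite (bigD1 i) //= catprob_shift eqxx.
rewrite (eq_bigr (fun t => catprob rho t (x t))); last first.
  by move=> t /andP[_ /negbTE ti]; rewrite catprob_shift ti addr0.
rewrite (bigD1 i iS) /=.
have -> : \prod_(t in S :\ i) catprob rho t (x t) =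
   \prod_(t | (t \in S) && (t != i)) catprob rho t (x t).
  by apply: eq_bigl => t; rewrite !inE andbC.
ring.
Qed.

Lemma G_shift_out (S : {set 'I_n}) w rho h (i : 'I_n) (l : 'I_k.-1) : i \notin S ->
  G S w (h *: edir i l + rho) = G S w rho.
Proof.
move=> iS; rewrite /G; apply: eq_bigr => x _; congr (_ * _).
apply: eq_bigr => t tS; rewrite catprob_shift.
case: eqP => [eti|]; last by rewrite addr0.
by move: iS; rewrite -eti tS.
Qed.

Lemma D_affine (F : 'M[R]_(n,k.-1) -> R) a v c :
  (forall h : R, F (h *: v + a) = F a + h * c) -> 'D_v F a = c.
Proof.
move=> hF; apply/lim_near_cst => //=.
near=> h.
rewrite hF addrC addKr.
have h0 : h != 0 by near: h; exact: nbhs_dnbhs_neq.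
by rewrite /GRing.scale /= mulrA mulVf // mul1r.
Unshelve. all: by end_near. Qed.

Lemma DG_in (S : {set 'I_n}) w rho (i : 'I_n) (l : 'I_k.-1) : i \in S ->
  'D_(edir i l) (G S w) rho = G (S :\ i) (fun x => w x * dd l (x i)) rho.
Proof. by move=> iS; apply: D_affine => h; rewrite G_shift_in. Qed.

Lemma DG_out (S : {set 'I_n}) w rho (i : 'I_n) (l : 'I_k.-1) : i \notin S ->
  'D_(edir i l) (G S w) rho = 0.
Proof. by move=> iS; apply: D_affine => h; rewrite G_shift_out // mulr0 addr0. Qed.



Variables (z0 : 'I_k) (hz0 : nat_of_ord z0 = 0%N).

Definition sw (a v : 'I_k) : 'I_k := if v == a then z0 else if v == z0 then a else v.

Lemma swK a : involutive (sw a).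
Proof.
move=> v; rewrite /sw.
case: (eqVneq v a) => [->|va].
  rewrite eqxx; case: (eqVneq z0 a) => [->|za]; first by [].
  by [].
case: (eqVneq v z0) => [->|vz]; first by rewrite eqxx.
by rewrite (negbTE va) (negbTE vz).
Qed.

Lemma sw0 v : sw z0 v = v.
Proof. by rewrite /sw; case: (eqVneq v z0). Qed.

Lemma swz a : sw a z0 = a.
Proof. by rewrite /sw; case: (eqVneq z0 a) => [->|]; rewrite ?eqxx. Qed.

Lemma sw_eq a v : (sw a v == a) = (v == z0).
Proof.
rewrite /sw; case: (eqVneq v a) => [eva|va].
  by rewrite -?eva eq_sym.
case: (eqVneq v z0) => [evz|vz]; first by rewrite -?evz eqxx.
by rewrite (negbTE va).
Qed.

Definition swp (c : 'I_n -> 'I_k) (x : lattice_pt n k) : lattice_pt n k :=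
  [ffun t => sw (c t) (x t)].

Lemma swpK c : involutive (swp c).
Proof. by move=> x; apply/ffunP => t; rewrite !ffunE swK. Qed.

Lemma swp_inj c : injective (swp c).
Proof. exact: can_inj (swpK c). Qed.

Lemma prod_swp (rho : 'M[R]_(n, k.-1)) (S : {set 'I_n}) c x :
  (forall t, t \in S -> c t = z0) ->
  \prod_(t in S) catprob rho t (swp c x t) = \prod_(t in S) catprob rho t (x t).
Proof. by move=> hc; apply: eq_bigr => t tS; rewrite ffunE hc // sw0. Qed.

Lemma catprob_ge0 (rho : 'M[R]_(n, k.-1)) t a : in_simplex_n rho -> 0 <= catprob rho t a.
Proof.
move=> /(_ t) [h1 h2]; rewrite /catprob; case: ifP => _.
  by rewrite subr_ge0.
by apply: sumr_ge0 => j _.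
Qed.

Lemma prod_ge0' (rho : 'M[R]_(n, k.-1)) (S : {set 'I_n}) x : in_simplex_n rho ->
  0 <= \prod_(t in S) catprob rho t (x t).
Proof. by move=> hs; apply: prodr_ge0 => t _; exact: catprob_ge0. Qed.

Lemma le_swp (c : 'I_n -> 'I_k) (x : lattice_pt n k) : (forall t, c t != z0 -> x t == z0) -> pt_le x (swp c x).
Proof.
move=> h t; rewrite ffunE; case: (eqVneq (c t) z0) => [->|ct]; first by rewrite sw0.
by rewrite (eqP (h t ct)) hz0.
Qed.

Lemma eq_z0 (v : 'I_k) : (v == 0 :> nat) = (v == z0).
Proof. by rewrite -val_eqE /= hz0. Qed.

Lemma G_pos (S : {set 'I_n}) f (rho : 'M[R]_(n, k.-1)) (i : 'I_n) (j : 'I_k.-1) :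
  in_simplex_n rho -> monotone_fn f -> i \notin S ->
  0 <= G S (fun x => f x * dd j (x i)) rho.
Proof.
move=> hs hm iS.
have ja : (j.+1 < k)%N by have := ltn_ord j; have := ltn_ord z0; lia.
pose a := Ordinal ja.
pose c := fun t => if t == i then a else z0.
pose P := fun x : lattice_pt n k => \prod_(t in S) catprob rho t (x t).
have hc : forall t, t \in S -> c t = z0.
  by move=> t tS; rewrite /c; case: eqP => // eti; move: iS; rewrite -eti tS.
have E : G S (fun x => f x * dd j (x i)) rho =
  \sum_(x : lattice_pt n k) (x i == a)%:R * (f x * P x) - \sum_(x : lattice_pt n k) (x i == z0)%:R * (f x * P x).
  rewrite /G -sumrB; apply: eq_bigr => x _; rewrite /dd eq_z0.
  have -> : (j.+1 == x i :> nat) = (x i == a) by rewrite -val_eqE /= eq_sym.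
  rewrite /P; ring.
rewrite E (reindex_inj (swp_inj c)) /= -sumrB.
apply: sumr_ge0 => x _.
have -> : (swp c x i == a) = (x i == z0) by rewrite ffunE /c eqxx sw_eq.
rewrite /P prod_swp //.
case: (eqVneq (x i) z0) => xi /=; last by rewrite !mul0r subrr.
rewrite !mul1r -mulrBl; apply: mulr_ge0; last exact: prod_ge0'.
rewrite subr_ge0; apply: hm; apply: le_swp => t; rewrite /c.
by case: (eqVneq t i) => [->|ti]; rewrite ?xi ?eqxx ?implybT // (negbTE ti) eqxx.
Qed.

Lemma G_neg (S : {set 'I_n}) f (rho : 'M[R]_(n, k.-1)) (i i' : 'I_n) (j l : 'I_k.-1) :
  in_simplex_n rho -> integer_submodular f -> i != i' -> i \notin S -> i' \notin S ->
  G S (fun x => f x * dd j (x i) * dd l (x i')) rho <= 0.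
Proof.
move=> hs hsub ii' iS i'S.
have ja : (j.+1 < k)%N by have := ltn_ord j; have := ltn_ord z0; lia.
have lb : (l.+1 < k)%N by have := ltn_ord l; have := ltn_ord z0; lia.
pose a := Ordinal ja.
pose b := Ordinal lb.
pose cc p q := fun t => if t == i then p else if t == i' then q else z0.
pose P := fun x : lattice_pt n k => \prod_(t in S) catprob rho t (x t).
have hc p q : forall t, t \in S -> cc p q t = z0.
  move=> t tS; rewrite /cc; case: eqP => [eti|_]; first by move: iS; rewrite -eti tS.
  by case: eqP => // eti; move: i'S; rewrite -eti tS.
have key p q : \sum_(x : lattice_pt n k) ((x i == p) && (x i' == q))%:R * (f x * P x) =
   \sum_(x : lattice_pt n k) ((x i == z0) && (x i' == z0))%:R * (f (swp (cc p q) x) * P x).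
  rewrite (reindex_inj (swp_inj (cc p q))); apply: eq_bigr => x _.
  rewrite !ffunE /cc eqxx (eq_sym i' i) (negbTE ii') eqxx !sw_eq /P prod_swp //; exact: hc.
have hb (b1 b2 : bool) : ((b1 && b2)%:R : R) = b1%:R * b2%:R.
  by case: b1; case: b2; rewrite ?mul1r ?mul0r.
have E : G S (fun x => f x * dd j (x i) * dd l (x i')) rho =
  \sum_(x : lattice_pt n k) ((x i == a) && (x i' == b))%:R * (f x * P x)
  - \sum_(x : lattice_pt n k) ((x i == a) && (x i' == z0))%:R * (f x * P x)
  - \sum_(x : lattice_pt n k) ((x i == z0) && (x i' == b))%:R * (f x * P x)
  + \sum_(x : lattice_pt n k) ((x i == z0) && (x i' == z0))%:R * (f x * P x).
  rewrite /G -!sumrB -big_split /=; apply: eq_bigr => x _; rewrite /dd !eq_z0 !hb.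
  have -> : (j.+1 == x i :> nat) = (x i == a) by rewrite -val_eqE /= eq_sym.
  have -> : (l.+1 == x i' :> nat) = (x i' == b) by rewrite -val_eqE /= eq_sym.
  rewrite /P; ring.
rewrite E !key -!sumrB -big_split /=.
apply: sumr_le0 => x _.
case: andP => [[/eqP xi /eqP xi']|_]; last by rewrite /= !mul0r !subrr add0r.
rewrite !mul1r.
have hP : 0 <= P x by exact: prod_ge0'.
have J : pt_join (swp (cc a z0) x) (swp (cc z0 b) x) = swp (cc a b) x.
  apply/ffunP => t; rewrite !ffunE /cc.
  case: (eqVneq t i) => [->|ti].
    rewrite ?eqxx xi !sw0 !swz; case: leqP => h //.
    by apply: val_inj => /=; move: h; rewrite hz0; lia.
  case: (eqVneq t i') => [->|ti']; last by rewrite !sw0 leqnn.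
  by rewrite xi' !sw0 !swz hz0 leq0n.
have M : pt_meet (swp (cc a z0) x) (swp (cc z0 b) x) = swp (cc z0 z0) x.
  apply/ffunP => t; rewrite !ffunE /cc.
  case: (eqVneq t i) => [->|ti].
    rewrite ?eqxx xi !sw0 !swz; case: leqP => h //.
    by apply: val_inj => /=; move: h; rewrite hz0; lia.
  case: (eqVneq t i') => [->|ti']; last by rewrite !sw0 leqnn.
  by rewrite xi' !sw0 !swz hz0 leq0n.
have hs2 := hsub (swp (cc a z0) x) (swp (cc z0 b) x).
rewrite J M in hs2.
set u1 := f (swp (cc a b) x) in hs2 *.
set u2 := f (swp (cc a z0) x) in hs2 *.
set u3 := f (swp (cc z0 b) x) in hs2 *.
set u4 := f (swp (cc z0 z0) x) in hs2 *.
have -> : u1 * P x - u2 * P x - u3 * P x + u4 * P x = (u1 - u2 - u3 + u4) * P x by ring.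
apply: mulr_le0_ge0 => //; lra.
Qed.

End S.
Arguments dd {R k}.
Arguments G {R n k}.
Arguments DG_in {R n k}.
Arguments DG_out {R n k}.
Arguments G_pos {R n k z0}.
Arguments G_neg {R n k z0}.

Theorem proposition1 (R : realType) (n k : nat) (hn : (1 <= n)%N) (hk : (2 <= k)%N)
  (f : lattice_pt n k -> R) (hsub : integer_submodular f) :
  (monotone_fn f ->
     forall rho : 'M[R]_(n, k.-1), in_simplex_n rho ->
     forall (i : 'I_n) (j : 'I_(k.-1)),
       0 <= 'D_(edir i j) (gme f) rho) /\
  (forall rho : 'M[R]_(n, k.-1), in_simplex_n rho ->
     forall (i i' : 'I_n) (j l : 'I_(k.-1)),
       'D_(edir i' l) ('D_(edir i j) (gme f)) rho <= 0).
Proof.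
pose z0 := Ordinal (n:=k) (m:=0) (ltnW hk).
have hz0 : nat_of_ord z0 = 0%N by [].
have hG : gme f = G [set: 'I_n] f.
  apply: funext => rho; rewrite /gme /G; apply: eq_bigr => x _; congr (_ * _).
  by apply: eq_bigl => t; rewrite inE.
rewrite hG; split.
  move=> hm rho hs i j; rewrite DG_in ?inE //.
  by apply: (G_pos hz0) => //; rewrite !inE eqxx.
move=> rho hs i i' j l.
have -> : 'D_(edir i j) (G [set: 'I_n] f) = G ([set: 'I_n] :\ i) (fun x => f x * dd j (x i)).
  by apply: funext => r; rewrite DG_in ?inE.
case: (eqVneq i' i) => [->|i'i]; first by rewrite DG_out // !inE eqxx.
rewrite DG_in; last by rewrite !inE i'i.
apply: (G_neg hz0) => //; first by rewrite eq_sym.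
  by rewrite !inE eqxx andbF.
by rewrite !inE eqxx.
Qed.
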